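(* Let $p$ be a prime with $p\equiv 3 \pmod 4$. Then $$\sum_{k=0}^{p-1}\frac{\binom{2k}{k} f_k}{(-16)^k} \equiv 0 \pmod{p}.$$
   Context: The Franel numbers are defined by $f_n=\sum_{k=0}^n \binom{n}{k}^3$ for integers $n\ge 0$. The left-hand side is a rational number whose denominator is a power of $2$, hence coprime to $p$; a congruence modulo $p$ between such rationals means that the difference has numerator (in lowest terms) divisible by $p$ and denominator coprime to $p$. *)

(* Defs.v *)
From mathcomp Require Import all_boot all_order all_algebra.
Set Implicit Arguments. Unset Strict Implicit. Unset Printing Implicit Defensive.
Import Order.TTheory GRing.Theory Num.Theory.

Definition franel (n : nat) : nat := (\sum_(k < n.+1) 'C(n, k) ^ 3)%N.

(* Congruence of rationals modulo a (prime) p: the difference, in lowest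
   terms, has numerator divisible by p and denominator coprime to p. *)
Definition rat_cong (p : nat) (x y : rat) : Prop :=
  (p %| `|numq (x - y)|)%N /\ coprime p `|denq (x - y)|.

(* Main.v *)
Require Import Defs.
From mathcomp Require Import all_boot all_order all_algebra.
From mathcomp Require Import ring zify.
Import GRing.Theory Num.Theory.

Lemma bin_rev a c t : 'C(a, c + t) * 'C(c + t, c) = 'C(a, c) * 'C(a - c, t).
Proof.
case: (leqP (c + t) a) => h; last first.
  rewrite bin_small // mul0n.
  case: (leqP c a) => hc; last by rewrite bin_small.
  by rewrite (@bin_small (a - c)) ?muln0 //; lia.
have E1 := bin_fact h.
have E2 := @bin_fact (c + t) c (leq_addr _ _).
have hc : c <= a by lia.
have E3 := bin_fact hc.
have ht : t <= a - c by lia.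
have E4 := bin_fact ht.
rewrite addKn in E2.
have e : a - (c + t) = a - c - t by lia.
rewrite e in E1.
apply/eqP; rewrite -(@eqn_pmul2r (c`! * (t`! * (a - c - t)`!))); last first.
  by rewrite !muln_gt0 !fact_gt0.
have -> : 'C(a, c + t) * 'C(c + t, c) * (c`! * (t`! * (a - c - t)`!)) =
   'C(a, c + t) * ('C(c + t, c) * (c`! * t`!)) * (a - c - t)`! by ring.
rewrite E2.
have -> : 'C(a, c) * 'C(a - c, t) * (c`! * (t`! * (a - c - t)`!)) =
   'C(a, c) * (c`! * ('C(a - c, t) * (t`! * (a - c - t)`!))) by ring.
rewrite E4 E3 -mulnA E1 //.
Qed.

Lemma bin_rev2 a b c : b <= a -> 'C(a, b) * 'C(b, c) = 'C(a, c) * 'C(a - c, a - b).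
Proof.
move=> hb; case: (leqP c b) => hc; last first.
  rewrite (@bin_small b) // muln0.
  case: (leqP c a) => hca; last by rewrite bin_small.
  rewrite (@bin_small (a - c)) ?muln0 //; lia.
have := bin_rev a c (b - c); rewrite subnKC // => ->.
have -> : a - b = a - c - (b - c) by lia.
rewrite bin_sub //; lia.
Qed.

Lemma big_narrow (R : Type) (idx : R) (op : Monoid.law idx) N m (F : nat -> R) :
  m <= N -> (forall j, m <= j -> j < N -> F j = idx) ->
  \big[op/idx]_(j < N) F j = \big[op/idx]_(j < m) F j.
Proof.
move=> hm hF; rewrite -!(big_mkord xpredT) (@big_cat_nat _ _ _ m 0 N _ _ (leq0n m) hm) /=.
rewrite [X in op _ X]big_nat_cond [X in op _ X]big1 ?Monoid.mulm1 //.
by move=> j /andP[/andP[h1 h2] _]; apply: hF.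
Qed.

Lemma big_rev' (R : Type) (idx : R) (op : Monoid.com_law idx) n (F : nat -> R) :
  \big[op/idx]_(i < n) F i = \big[op/idx]_(i < n) F (n - i.+1).
Proof. by rewrite (reindex_inj rev_ord_inj). Qed.

Lemma V2 a b : \sum_(j < a.+1) 'C(a, j) * 'C(b, j) = 'C(a + b, a).
Proof.
rewrite -binomial.Vandermonde (@big_rev' _ _ _ _ (fun j => 'C(a, j) * 'C(b, a - j))) /=; apply: eq_bigr => j _.
have hj : j <= a by rewrite -ltnS.
by rewrite subSS bin_sub // subKn.
Qed.

Lemma strehl k : franel k = \sum_(j < k.+1) 'C(k, j) ^ 2 * 'C(j.*2, k).
Proof.
rewrite /franel.
transitivity (\sum_(j < k.+1) \sum_(i < k.+1) ('C(k, j) * 'C(j, i)) * ('C(k, j) * 'C(j, k - i))); last first.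
  apply: eq_bigr => j _; rewrite -addnn -binomial.Vandermonde big_distrr /=.
  by apply: eq_bigr => i _; ring.
rewrite exchange_big /=; apply: eq_bigr => i _.
have hi : i <= k by rewrite -ltnS.
transitivity (\sum_(j < k.+1) ('C(k, i) ^ 2) * ('C(k - i, k - j) * 'C(i, k - j))).
  rewrite -big_distrr /= (@big_rev' _ _ _ _ (fun j => 'C(k - i, k - j) * 'C(i, k - j))) /=.
  rewrite (eq_bigr (fun j : 'I_k.+1 => 'C(k - i, j) * 'C(i, j))); last first.
    move=> j _; have hj : j <= k by rewrite -ltnS.
    by rewrite subSS subKn.
  rewrite (@big_narrow _ _ _ k.+1 (k - i).+1 (fun j => 'C(k - i, j) * 'C(i, j))); last 2 first.
  - by rewrite ltnS leq_subr.
  - by move=> j h1 h2; rewrite bin_small.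
  rewrite V2 subnK // bin_sub //; ring.
apply: eq_bigr => j _.
have hj : j <= k by rewrite -ltnS.
rewrite !bin_rev2 // subKn // bin_sub //; ring.
Qed.

Local Open Scope ring_scope.

Lemma big_shift (R : nmodType) N j (G : nat -> R) :
  (forall k, (k < j)%N -> G k = 0) -> (forall k, (N <= k)%N -> G k = 0) ->
  \sum_(k < N) G k = \sum_(i < N) G (j + i)%N.
Proof.
move=> h1 h2.
rewrite -(@big_narrow _ _ _ (N + j) N G) ?leq_addr //; last by move=> k hk _; apply: h2.
rewrite -(big_mkord xpredT) (@big_cat_nat _ _ _ j 0 (N + j) _ _ (leq0n j) (leq_addl _ _)) /=.
rewrite big_nat_cond big1 ?add0r; last by move=> k /andP[/andP[_ hk] _]; apply: h1.
rewrite -{1}[j]add0n big_addn addnK big_mkord.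
by apply: eq_bigr => i _; rewrite addnC.
Qed.

Lemma nmul_bin2 k : ('C(k.+1.*2, k.+1) * k.+1 = 2 * (k.*2.+1) * 'C(k.*2, k))%N.
Proof.
have e1 := mul_bin_diag (k.+1.*2) k.
have e2 := mul_bin_down (k.*2.+1) k.
rewrite doubleS /= in e1; rewrite /= in e2.
have e3 : (k.*2.+1 - k = k.+1)%N by lia.
rewrite e3 in e2.
rewrite doubleS mulnC -e1.
have -> : (k.*2.+2 = 2 * k.+1)%N by lia.
by rewrite -mulnA -e2 mulnA.
Qed.

Section Fp.
Variables (p n : nat).
Hypothesis hp : prime p.
Hypothesis hpn : p = n.*2.+1.
Local Notation F := 'F_p.

Lemma natF0 m : ((m%:R : F) == 0) = (p %| m)%N.
Proof. by rewrite (dvdn_pcharf (pchar_Fp hp)). Qed.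

Lemma fact_nz k : (k < p)%N -> (k`!%:R : F) != 0.
Proof.
rewrite natF0; elim: k => [|k IH] hk.
  by rewrite fact0 dvdn1; apply/eqP => h; move: (prime_gt1 hp); rewrite h.
rewrite factS Euclid_dvdM // negb_or IH ?andbT; last exact: ltnW.
apply/negP => /dvdn_leq => /(_ (ltn0Sn k)); lia.
Qed.

Lemma cbin_ff k : ('C(k.*2, k)%:R : F) * k`!%:R = (-4) ^+ k * (n ^_ k)%:R.
Proof.
elim: k => [|k IH]; first by rewrite fact0 bin0 ffactn0 mulr1.
have hp0 : (p%:R : F) = 0 by apply: pchar_Fp_0.
have L : ('C(k.+1.*2, k.+1)%:R : F) * (k.+1)`!%:R =
    (2 * (k.*2.+1))%:R * ('C(k.*2, k)%:R * k`!%:R).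
  by rewrite -!natrM factS mulnA nmul_bin2 mulnA.
rewrite L IH ffactnSr natrM exprS.
case: (leqP k n) => hk.
- have hp1 : ((n.*2.+1)%:R : F) = 0 by rewrite -hpn.
  rewrite natrM natrB //.
  have e : (n.*2.+1)%:R = 2 * (n%:R : F) + 1 by rewrite -addn1 natrD -mul2n natrM.
  have e2 : (k.*2.+1)%:R = 2 * (k%:R : F) + 1 by rewrite -addn1 natrD -mul2n natrM.
  rewrite e in hp1; rewrite e2.
  apply/eqP; rewrite -subr_eq0.
  set A := (-4 : F) ^+ k; set B := ((n ^_ k)%:R : F).
  have -> : 2 * (2 * k%:R + 1) * (A * B) - -4 * A * (B * (n%:R - k%:R)) =
      2 * A * B * (2 * n%:R + 1) by ring.
  by rewrite hp1 mulr0.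
- by rewrite ffact_small // mul0n !mulr0.
Qed.

Lemma cbin k : (k < p)%N -> ('C(k.*2, k)%:R : F) = (-4) ^+ k * ('C(n, k))%:R.
Proof.
move=> hk; have hf := @fact_nz k hk.
apply: (mulIf hf).
by rewrite cbin_ff -mulrA -natrM bin_ffact.
Qed.


Lemma franel_p k : (k < p)%N -> franel k = (\sum_(j < p) 'C(k, j) ^ 2 * 'C(j.*2, k))%N.
Proof.
move=> hk; rewrite strehl; symmetry.
rewrite (@big_narrow _ _ _ p k.+1 (fun j => ('C(k, j) ^ 2 * 'C(j.*2, k))%N)) //.
by move=> j h1 _; rewrite bin_small // exp0n.
Qed.

Hypothesis hn : odd n.
Variable c : F.
Hypothesis hc : 16 * c = -1.

Let x := -4 * c.

Definition Q a b := \sum_(i < p) ('C(a, i) * 'C(b, i))%:R * x ^+ i.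

Lemma QC a b : Q a b = Q b a.
Proof. by apply: eq_bigr => i _; rewrite mulnC. Qed.

Lemma np : (n < p)%N.
Proof. by rewrite hpn; lia. Qed.

Lemma sign_rev j : (j <= n)%N -> ((-1) ^+ (n - j) : F) = - (-1) ^+ j.
Proof.
move=> hj; rewrite -signr_odd oddB // hn -[in RHS]signr_odd.
by case: (odd j); rewrite /= ?expr0 ?expr1 ?opprK.
Qed.

Lemma core : \sum_(k < p) ('C(k.*2, k)%:R * (franel k)%:R * c ^+ k : F) = 0.
Proof.
have hx : -4 * x = -1 by rewrite -hc /x; ring.
transitivity (\sum_(j < p) \sum_(k < p)
   ('C(n, k)%:R * x ^+ k * ('C(k, j) ^ 2 * 'C(j.*2, k))%:R : F)).
  rewrite exchange_big /=; apply: eq_bigr => k _.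
  rewrite cbin // franel_p // natr_sum big_distrr big_distrl /=; apply: eq_bigr => j _.
  rewrite /x exprMn; ring.
transitivity (\sum_(j < p) (-1) ^+ j * ('C(n, j)%:R) ^+ 2 * Q (n - j) j).
  apply: eq_bigr => j _.
  rewrite (@big_shift _ p j (fun k => ('C(n, k)%:R * x ^+ k * ('C(k, j) ^ 2 * 'C(j.*2, k))%:R : F))); last 2 first.
  - by move=> k hk; rewrite (@bin_small k j) // exp0n // mul0n mulr0.
  - by move=> k hk; rewrite (@bin_small n k) ?mulr0 ?mul0r //; apply: leq_trans np hk.
  rewrite /Q big_distrr /=; apply: eq_bigr => i _.
  have e : ('C(n, j + i) * 'C(j + i, j) ^ 2 * 'C(j.*2, j + i) =
        ('C(n, j) * 'C(j.*2, j)) * ('C(n - j, i) * 'C(j, i)))%N.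
    have e1 := bin_rev n j i; have e2 := bin_rev j.*2 j i.
    rewrite -addnn addKn addnn in e2.
    have -> : ('C(n, j + i) * 'C(j + i, j) ^ 2 * 'C(j.*2, j + i) =
       ('C(n, j + i) * 'C(j + i, j)) * ('C(j.*2, j + i) * 'C(j + i, j)))%N by ring.
    rewrite e1 e2; ring.
  transitivity (('C(n, j + i) * 'C(j + i, j) ^ 2 * 'C(j.*2, j + i))%:R * x ^+ (j + i) : F).
    by rewrite !natrM; ring.
  rewrite e !natrM cbin; last exact: ltn_ord.
  rewrite exprD.
  have -> : (-1 : F) ^+ j = (-4 * x) ^+ j by rewrite hx.
  rewrite [(-4 * x) ^+ j]exprMn; ring.
set T := \sum_(j < p) _.
suff hT : T = - T.
  have h2 : (2%:R : F) != 0.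
    rewrite natF0; apply/negP => /dvdn_leq => /(_ isT); rewrite hpn.
    case: n hn => [|m] //= _; lia.
  have h0 : (2%:R : F) * T = 0 by rewrite mulr_natl mulr2n {2}hT subrr.
  by move/eqP: h0; rewrite mulf_eq0 (negbTE h2) /= => /eqP.
rewrite {1}/T (@big_narrow _ _ _ p n.+1 (fun j => (-1) ^+ j * ('C(n, j)%:R) ^+ 2 * Q (n - j) j : F)); last 2 first.
- exact: np.
- by move=> j h1 _; rewrite bin_small // mulr0n expr0n /= mulr0 mul0r.
rewrite (@big_rev' _ _ _ _ (fun j => (-1) ^+ j * ('C(n, j)%:R) ^+ 2 * Q (n - j) j : F)).
rewrite /T (@big_narrow _ _ _ p n.+1 (fun j => (-1) ^+ j * ('C(n, j)%:R) ^+ 2 * Q (n - j) j : F)); last 2 first.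
- exact: np.
- by move=> j h1 _; rewrite bin_small // mulr0n expr0n /= mulr0 mul0r.
rewrite -sumrN; apply: eq_bigr => j _.
have hj : (j <= n)%N by rewrite -ltnS.
by rewrite subSS subKn // bin_sub // sign_rev // QC !mulNr.
Qed.

End Fp.

Theorem theorem1p3 (p : nat) (hp : prime p) (hp4 : (p %% 4 = 3)%N) :
  rat_cong p
    (\sum_(k < p) ('C(k.*2, k)%:R * (franel k)%:R / ((-16) ^+ k) : rat)) 0.
Proof.
set n := (p %/ 4).*2.+1.
have hpn : p = n.*2.+1 by rewrite /n; lia.
have hn : odd n by rewrite /n /= odd_double.
have nd16 : ~~ (p %| 16)%N.
  have -> : (16 = 2 ^ 4)%N by [].
  rewrite Euclid_dvdX // andbT; apply/negP => /dvdn_leq h; have {h} h := h isT.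
  have := prime_gt1 hp; lia.
have cop16 : coprime p (16 ^ (p.-1)).
  by apply: coprimeXr; rewrite prime_coprime.
set S := \sum_(k < p) _.
pose N : int := \sum_(k < p) (-1) ^+ k * ('C(k.*2, k) * franel k * 16 ^ (p.-1 - k))%N%:Z.
pose M := (16 ^ p.-1)%N.
have hSN : S * M%:R = N%:~R.
  rewrite /S /N big_distrl rmorph_sum /=; apply: eq_bigr => k _.
  have hk : (k <= p.-1)%N by rewrite -ltnS prednK ?prime_gt0.
  rewrite rmorphM rmorphXn /= rmorphN rmorph1 -[in RHS]pmulrn !natrM.
  have -> : M = (16 ^ k * 16 ^ (p.-1 - k))%N by rewrite /M -expnD subnKC.
  rewrite natrM !natrX.
  have h16 : (16%:R : rat) ^+ k != 0 by rewrite expf_neq0.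
  have -> : (-16 : rat) ^+ k = (-1) ^+ k * 16%:R ^+ k.
    by rewrite -exprMn mulN1r.
  rewrite invr_signM; field; exact: h16.
have hN : (N%:~R : 'F_p) = 0.
  have h16 : (16%:R : 'F_p) != 0 by rewrite (natF0 _ hp).
  have [c hc] : exists c : 'F_p, 16 * c = -1.
    by exists (- (16%:R)^-1); rewrite mulrN mulfV.
  have h0 := @core p n hp hpn hn c hc.
  rewrite /N rmorph_sum /=.
  transitivity ((16%:R : 'F_p) ^+ p.-1 * \sum_(k < p) ('C(k.*2, k)%:R * (franel k)%:R * c ^+ k : 'F_p)); last by rewrite h0 mulr0.
  rewrite big_distrr /=; apply: eq_bigr => k _.
  have hk : (k <= p.-1)%N by rewrite -ltnS prednK ?prime_gt0.
  rewrite rmorphM rmorphXn /= rmorphN rmorph1 -[in LHS]pmulrn !natrM natrX.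
  have -> : (16%:R : 'F_p) ^+ p.-1 = 16%:R ^+ k * 16%:R ^+ (p.-1 - k) by rewrite -exprD subnKC.
  have e2 : (16%:R : 'F_p) ^+ k * c ^+ k = (-1) ^+ k by rewrite -exprMn hc.
  rewrite -e2; ring.
have hpN : (p %| `|N|)%N.
  move: hN; rewrite {1}[N]intEsign rmorphM rmorphXn /= rmorphN rmorph1 -pmulrn.
  move/eqP; rewrite mulf_eq0 signr_eq0 /= => /eqP.
  by move/eqP; rewrite (natF0 _ hp).
have e : (numq S * (M%:Z) = N * denq S)%R.
  apply: (@intr_inj rat); rewrite !rmorphM /= numqE -hSN.
  by rewrite -[M%:~R]pmulrn mulrAC.
have e' : (`|numq S| * M = `|N| * `|denq S|)%N.
  by have := congr1 absz e; rewrite !abszM.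
rewrite /M in e'.
rewrite /rat_cong subr0; split.
  by rewrite -(Gauss_dvdl _ cop16) e' dvdn_mulr.
apply: (coprime_dvdr _ cop16).
have cnd : coprime `|denq S| `|numq S| by rewrite coprime_sym coprime_num_den.
by rewrite -(Gauss_dvdr _ cnd) e' dvdn_mull.
Qed.
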